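(* Let $(A,p)$ be a financial market with a riskless asset with $p_1=1$, and let $(\Theta,D)$ be the corresponding matrix scheme. Then $(A,p)$ contains no arbitrage portfolio if and only if for every subset $D'\subseteq D$ with $|D'|\ge 2$ the matrix scheme $(\Theta,D')$ contains uncertainty.
   Context: Vector order: for $x,y\in\mathbb{R}^k$, $x\le y$ means $x_i\le y_i$ for all $i$, and $x<y$ means $x\le y$ and $x\neq y$. A financial market with a riskless asset is a pair $(A,p)$ with $A\in\mathbb{R}^{n\times m}$, $p\in\mathbb{R}^n$, such that $A_{1j}=1$ for all $j\in\{1,\dots,m\}$ (here we additionally assume $p_1=1$). A portfolio $x\in\mathbb{R}^n$ is an arbitrage portfolio on $(A,p)$ if either ($p^Tx\le 0$ and $A^Tx>0$) or ($p^Tx<0$ and $A^Tx\ge 0$). The corresponding matrix scheme is $(\Theta,D)$ with $\Theta=\{1,\dots,m\}$, $B=A-[p\ p\ \cdots\ p]$ (i.e. $B_{i\theta}=A_{i\theta}-p_i$), and $D=\{B^Tx: x\in\mathbb{R}^n\}\subseteq\mathbb{R}^m$, each vector viewed as a real function on $\Theta$. A matrix scheme is a pair $(\Theta,D')$ with $D'$ a set of real functions on $\Theta$. A preference relation on a set $X$ is an asymmetric ($x\prec y\Rightarrow$ not $y\prec x$) and negatively transitive (not $x\prec y$ and not $y\prec z\Rightarrow$ not $x\prec z$) binary relation. Domination on $D'$: $d_1\prec d_2$ iff $d_1(\theta)\le d_2(\theta)$ for all $\theta$ and $d_1(\theta^* )<d_2(\theta^* )$ for some $\theta^*$. A projection of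 preference of consequences in $(\Theta,D')$ is a preference relation $\prec^P$ on $D'$ with $d_1\prec d_2\Rightarrow d_1\prec^P d_2$ for all $d_1,d_2\in D'$. The scheme $(\Theta,D')$ contains uncertainty if this projection is not unique. *)

(* Defs.v *)
(* the statement is purely algebraic/order-theoretic, so it is
   stated over an arbitrary real field R (R = the reals is a special case). *)
From HB Require Import structures.
From mathcomp Require Import all_boot all_order all_algebra.
Set Implicit Arguments. Unset Strict Implicit. Unset Printing Implicit Defensive.
Import Order.TTheory GRing.Theory Num.Theory.
Local Open Scope ring_scope.

Definition vle (R : realFieldType) (k l : nat) (x y : 'M[R]_(k, l)) : Prop :=
  forall i j, x i j <= y i j.
Definition vlt (R : realFieldType) (k l : nat) (x y : 'M[R]_(k, l)) : Prop :=
  vle x y /\ x <> y.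

(* Financial market with a riskless asset: row 1 (index ord0) of A is all ones,
   and p_1 = 1.  Assets are indexed by 'I_n.+1, states by 'I_m.+1. *)
Definition riskless_market (R : realFieldType) (n m : nat)
    (A : 'M[R]_(n.+1, m.+1)) (p : 'cV[R]_n.+1) : Prop :=
  (forall j, A ord0 j = 1) /\ p ord0 ord0 = 1.

Definition arbitrage_portfolio (R : realFieldType) (n m : nat)
    (A : 'M[R]_(n.+1, m.+1)) (p : 'cV[R]_n.+1) (x : 'cV[R]_n.+1) : Prop :=
  ((p^T *m x) ord0 ord0 <= 0 /\ vlt 0 (A^T *m x))
  \/ ((p^T *m x) ord0 ord0 < 0 /\ vle 0 (A^T *m x)).

Definition schemeB (R : realFieldType) (n m : nat)
    (A : 'M[R]_(n.+1, m.+1)) (p : 'cV[R]_n.+1) : 'M[R]_(n.+1, m.+1) :=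
  \matrix_(i, j) (A i j - p i ord0).

(* The set D = { B^T x : x in R^n } of the corresponding matrix scheme;
   elements are column vectors indexed by Theta = 'I_m.+1. *)
Definition schemeD (R : realFieldType) (n m : nat)
    (A : 'M[R]_(n.+1, m.+1)) (p : 'cV[R]_n.+1) (d : 'cV[R]_m.+1) : Prop :=
  exists x : 'cV[R]_n.+1, d = (schemeB A p)^T *m x.

Definition dominates (R : realFieldType) (m : nat) (d1 d2 : 'cV[R]_m) : Prop :=
  (forall t, d1 t ord0 <= d2 t ord0) /\ (exists t, d1 t ord0 < d2 t ord0).

Definition preference_on (T : Type) (S : T -> Prop) (r : T -> T -> Prop) : Prop :=
  (forall x y, S x -> S y -> r x y -> ~ r y x) /\
  (forall x y z, S x -> S y -> S z -> ~ r x y -> ~ r y z -> ~ r x z).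

Definition projection_of_preference (R : realFieldType) (m : nat)
    (S : 'cV[R]_m -> Prop) (r : 'cV[R]_m -> 'cV[R]_m -> Prop) : Prop :=
  preference_on S r /\
  (forall d1 d2, S d1 -> S d2 -> dominates d1 d2 -> r d1 d2).

Definition contains_uncertainty (R : realFieldType) (m : nat)
    (S : 'cV[R]_m -> Prop) : Prop :=
  exists r1 r2, projection_of_preference S r1 /\ projection_of_preference S r2 /\
    exists d1 d2, S d1 /\ S d2 /\ ~ (r1 d1 d2 <-> r2 d1 d2).

(* Main.v *)
Require Import Defs.
From HB Require Import structures.
From mathcomp Require Import all_boot all_order all_algebra.
Import Order.TTheory GRing.Theory Num.Theory.
Local Open Scope ring_scope.

Lemma BTx (R : realFieldType) (n m : nat)
    (A : 'M[R]_(n.+1, m.+1)) (p : 'cV[R]_n.+1) (x : 'cV[R]_n.+1) (j : 'I_m.+1) :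
  ((schemeB A p)^T *m x) j ord0 = (A^T *m x) j ord0 - (p^T *m x) ord0 ord0.
Proof.
rewrite !mxE -sumrB; apply: eq_bigr => i _; rewrite !mxE mulrBl.
by [].
Qed.

Lemma dom_arb (R : realFieldType) (n m : nat)
    (A : 'M[R]_(n.+1, m.+1)) (p : 'cV[R]_n.+1) (y : 'cV[R]_n.+1) :
  riskless_market A p -> dominates 0 ((schemeB A p)^T *m y) ->
  exists x, arbitrage_portfolio A p x.
Proof.
move=> [HA Hp] [Hle [t Ht]].
set c := (p^T *m y) ord0 ord0.
exists (y - c *: delta_mx ord0 ord0).
have E1 : forall j, (A^T *m (y - c *: delta_mx ord0 ord0)) j ord0
   = ((schemeB A p)^T *m y) j ord0.
  move=> j; rewrite BTx mulmxBr -scalemxAr -colE !mxE HA mulr1.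
  by rewrite /c !mxE.
left; split.
  rewrite mulmxBr -scalemxAr -colE !mxE Hp mulr1 /c mxE subrr.
  by [].
split.
  move=> i j; rewrite (ord1 j) E1; move: (Hle i); by rewrite mxE.
move=> H0; move: Ht; rewrite -E1 -H0 !mxE ltxx.
by [].
Qed.

Theorem theorem2 (R : realFieldType) (n m : nat)
    (A : 'M[R]_(n.+1, m.+1)) (p : 'cV[R]_n.+1) :
  riskless_market A p ->
  ((~ exists x : 'cV[R]_n.+1, arbitrage_portfolio A p x) <->
   (forall D' : 'cV[R]_m.+1 -> Prop,
      (forall d, D' d -> schemeD A p d) ->
      (exists d1 d2, D' d1 /\ D' d2 /\ d1 <> d2) ->
      contains_uncertainty D')).
Proof.
move=> Hm; split.
- move=> Hna D' HD [d1 [d2 [H1 [H2 Hne]]]].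
  have Hnd : forall a b, D' a -> D' b -> ~ dominates a b.
    move=> a b Ha Hb Hab; apply: Hna.
    have [xa Ea] := HD a Ha; have [xb Eb] := HD b Hb.
    apply: (@dom_arb _ _ _ A p (xb - xa) Hm).
    have -> : (schemeB A p)^T *m (xb - xa) = b - a by rewrite mulmxBr Ea Eb.
    case: Hab => [Hl [t Ht]]; split.
      by move=> t'; rewrite !mxE subr_ge0.
    by exists t; rewrite !mxE subr_gt0.
  exists (fun _ _ => False), (fun x y => x = d1 /\ y <> d1).
  split; [split; [split|] |].
  + by move=> x y _ _ [].
  + by move=> x y z _ _ _ _ _ [].
  + by move=> a b Ha Hb /(Hnd a b Ha Hb).
  split; [split; [split|] |].
  + by move=> x y _ _ [-> Hy] [].
  + move=> x y z _ _ _ Hxy Hyz [Ex Hz]; subst x.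
    case: (boolP (y == d1)) => [/eqP Ey|/eqP Ey].
      by subst y; apply: Hyz.
    by apply: Hxy.
  + by move=> a b Ha Hb /(Hnd a b Ha Hb).
  exists d1, d2; split; first by [].
  split; first by [].
  move=> [_ H]; apply: H; split; first by [].
  by move=> E; apply: Hne.
- move=> HU [x Hx].
  set d := (schemeB A p)^T *m x.
  have Hdom : dominates 0 d.
    case: Hx => [[Hpx [Hle Hne]]|[Hpx Hle]].
    + split.
        move=> t; rewrite mxE /d BTx; move: (Hle t ord0); rewrite mxE => h.
        by rewrite subr_ge0 (le_trans Hpx h).
      have [/existsP [t Ht]|/existsPn Hall] := boolP [exists t, 0 < (A^T *m x) t ord0].
        exists t; rewrite mxE /d BTx subr_gt0.
      exact: le_lt_trans Hpx Ht.
      exfalso; apply: Hne; apply/matrixP => i j.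
      rewrite (ord1 j) [LHS]mxE; apply/eqP; rewrite eq_le; apply/andP; split.
        by move: (Hle i ord0); rewrite mxE.
      by rewrite leNgt; apply: Hall.
    + have Ht : forall t, 0 < d t ord0.
        move=> t; rewrite /d BTx subr_gt0; move: (Hle t ord0); rewrite mxE => h.
        exact: lt_le_trans Hpx h.
      split; first by move=> t; rewrite mxE ltW.
      by exists ord0; rewrite mxE.
  have Hd0 : d <> 0.
    move=> E; case: Hdom => _ [t]; by rewrite E mxE ltxx.
  have := HU (fun z => z = 0 \/ z = d).
  case.
  + move=> z [->|->]; first by exists 0; rewrite mulmx0.
    by exists x.
  + by exists 0, d; split; [left|split; [right| move=> E; apply: Hd0]].
  move=> r1 [r2 [[[As1 _] D1] [[[As2 _] D2] [a [b [Ha [Hb Hn]]]]]]].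
  apply: Hn.
  have H1 := D1 0 d (or_introl erefl) (or_intror erefl) Hdom.
  have H2 := D2 0 d (or_introl erefl) (or_intror erefl) Hdom.
  have irr1 : forall z, z = 0 \/ z = d -> ~ r1 z z.
    by move=> z Hz h; exact: (As1 z z Hz Hz h h).
  have irr2 : forall z, z = 0 \/ z = d -> ~ r2 z z.
    by move=> z Hz h; exact: (As2 z z Hz Hz h h).
  case: Ha => ->; case: Hb => ->.
  + split => h; [by case: (irr1 0 (or_introl erefl))|by case: (irr2 0 (or_introl erefl))].
  + by split.
  + split => h.
      by case: (As1 0 d (or_introl erefl) (or_intror erefl) H1).
    by case: (As2 0 d (or_introl erefl) (or_intror erefl) H2).
  + split => h; [by case: (irr1 d (or_intror erefl))|by case: (irr2 d (or_intror erefl))].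
Qed.
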